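(* Let $\mathcal G$ be an étale groupoid and $K$ a compact subset of $\mathcal G$. Regard $\mathcal G$ as a left $\mathcal G$-space via multiplication (anchor map $r$), and let \[\Delta_K(\mathcal G)=\{\delta\subseteq\mathcal G\text{ finite nonempty}:\forall\gamma_1,\gamma_2\in\delta,\ r(\gamma_1)=r(\gamma_2),\ \gamma_1^{-1}\gamma_2\in K\}.\] Then (1) $(\mathcal G,\Delta_K(\mathcal G))$ is a finite-dimensional $\mathcal G$-simplicial complex; (2) it satisfies hypotheses $(H_1)$ and $(H_2)$; (3) it is proper and $\mathcal G$-compact.
   Context: Étale groupoids are locally compact Hausdorff with range map a local homeomorphism. A $\mathcal G$-simplicial complex is a pair $(Y,\Delta)$ with $Y$ a locally compact Hausdorff left $\mathcal G$-space whose anchor $\rho$ is a local homeomorphism, and $\Delta$ a family of finite nonempty subsets of $Y$, each contained in a fibre of $\rho$, closed under nonempty subsets and under $\delta\mapsto\gamma\delta$ (for $\delta\subseteq\rho^{-1}(s(\gamma))$); it is finite-dimensional if the cardinalities of elements of $\Delta$ are bounded. $(H_1)$: for every compact $K'\subseteq Y$, $\{y:\exists y'\in K',\{y,y'\}\in\Delta\}$ is compact. $(H_2)$: if nets $(y^{(i)}_\lambda)_\lambda$ converge to $y^{(i)}$ ($0\le i\le k$) and $\{y^{(0)}_\lambda,\dots,y^{(k)}_\lambda\}\in\Delta$ for all $\lambda$, then $\{y^{(0)},\dots,y^{(k)}\}\in\Delta$. $(Y,\Delta)$ is proper if the action on $Y$ is proper, and $\mathcal G$-compact if $\{y:\{y\}\in\Delta\}$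 equals $\mathcal GC$ for some compact $C$. *)

(* Defs.v *)
From HB Require Import structures.
From mathcomp Require Import all_boot all_order all_algebra.
From mathcomp Require Import all_classical all_reals all_analysis.
Set Implicit Arguments. Unset Strict Implicit. Unset Printing Implicit Defensive.
Import Order.TTheory GRing.Theory Num.Theory.
Local Open Scope classical_set_scope.

(* A local homeomorphism onto an open image: f is continuous, and every point
   has an open neighbourhood U on which f is injective and maps open subsets
   of U to open sets (so f restricted to U is a homeomorphism onto the open
   set f(U)). *)
Definition local_homeo (T U : topologicalType) (f : T -> U) : Prop :=
  continuous f /\
  forall t, exists V : set T, [/\ open V, V t, {in V &, injective f} &
     forall W, open W -> W `<=` V -> open (f @` W)].

(* Etale groupoid with arrow space G and unit space X (u : X -> G is the unit
   inclusion, which is automatically a homeomorphism onto its image since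
   r \o u = id).  Multiplication is a total function on G * G; only its values
   on composable pairs (s g = r h) matter. *)
Definition etale_groupoid (G X : topologicalType) (r s : G -> X) (u : X -> G)
    (inv : G -> G) (mul : G -> G -> G) : Prop :=
  [/\ (forall x, r (u x) = x /\ s (u x) = x),
      (forall g h, s g = r h -> r (mul g h) = r g /\ s (mul g h) = s h),
      (forall g h k, s g = r h -> s h = r k -> mul (mul g h) k = mul g (mul h k)),
      (forall g, mul (u (r g)) g = g /\ mul g (u (s g)) = g) &
      (forall g, [/\ r (inv g) = s g, s (inv g) = r g,
                   mul g (inv g) = u (r g) & mul (inv g) g = u (s g)])] /\
    [/\ hausdorff_space G /\ locally_compact [set: G],
        hausdorff_space X /\ locally_compact [set: X],
      [/\ continuous r, continuous s, continuous u & continuous inv],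
      {within [set p : G * G | s p.1 = r p.2], continuous (fun p => mul p.1 p.2)}
      & local_homeo r].

(* Left G-space Y with anchor rho : Y -> X (a local homeomorphism) and action
   act, a total function whose values matter only when s g = rho y. *)
Definition G_space (G X : topologicalType) (r s : G -> X) (u : X -> G)
    (mul : G -> G -> G) (Y : topologicalType) (rho : Y -> X)
    (act : G -> Y -> Y) : Prop :=
  [/\ hausdorff_space Y /\ locally_compact [set: Y], local_homeo rho,
      {within [set p : G * Y | s p.1 = rho p.2], continuous (fun p => act p.1 p.2)},
      (forall g y, s g = rho y -> rho (act g y) = r g) &
      (forall y, act (u (rho y)) y = y) /\
      (forall g h y, s g = r h -> s h = rho y -> act (mul g h) y = act g (act h y))].

Definition G_simplicial_complex (G X : topologicalType) (r s : G -> X)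
    (u : X -> G) (mul : G -> G -> G) (Y : topologicalType) (rho : Y -> X)
    (act : G -> Y -> Y) (Delta : set (set Y)) : Prop :=
  [/\ G_space r s u mul rho act,
      (forall d, Delta d -> finite_set d /\ d !=set0),
      (forall d, Delta d -> exists x, d `<=` rho @^-1` [set x]),
      (forall d d', Delta d -> d' `<=` d -> d' !=set0 -> Delta d') &
      (forall g d, Delta d -> d `<=` rho @^-1` [set s g] -> Delta (act g @` d))].

Definition finite_dimensional (Y : Type) (Delta : set (set Y)) : Prop :=
  exists n : nat, forall d, Delta d -> (d #<= `I_n)%card.

Definition H1 (Y : topologicalType) (Delta : set (set Y)) : Prop :=
  forall K' : set Y, compact K' ->
    compact [set y | exists2 y', K' y' & Delta [set y; y']].

Definition directed_set (L : Type) (le : L -> L -> Prop) : Prop :=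
  [/\ (exists l : L, True), (forall l, le l l),
      (forall a b c, le a b -> le b c -> le a c) &
      (forall a b, exists c, le a c /\ le b c)].

Definition net_converges (L : Type) (le : L -> L -> Prop) (Y : topologicalType)
    (x : L -> Y) (y : Y) : Prop :=
  forall U, nbhs y U -> exists l0, forall l, le l0 l -> U (x l).

Definition H2 (Y : topologicalType) (Delta : set (set Y)) : Prop :=
  forall (k : nat) (L : Type) (le : L -> L -> Prop)
         (net : 'I_k.+1 -> L -> Y) (lim : 'I_k.+1 -> Y),
    directed_set le ->
    (forall i, net_converges le (net i) (lim i)) ->
    (forall l, Delta [set net i l | i in [set: 'I_k.+1]]) ->
    Delta [set lim i | i in [set: 'I_k.+1]].

Definition proper_action (G X : topologicalType) (s : G -> X)
    (Y : topologicalType) (rho : Y -> X) (act : G -> Y -> Y) : Prop :=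
  forall C : set (Y * Y), compact C ->
    compact [set p : G * Y | s p.1 = rho p.2 /\ C (act p.1 p.2, p.2)].

Definition G_compact (G X : topologicalType) (s : G -> X)
    (Y : topologicalType) (rho : Y -> X) (act : G -> Y -> Y)
    (Delta : set (set Y)) : Prop :=
  exists2 C : set Y, compact C &
    [set y | Delta [set y]] = [set y | exists g c, [/\ C c, s g = rho c & y = act g c]].

Definition Delta_K (G X : topologicalType) (r : G -> X) (inv : G -> G)
    (mul : G -> G -> G) (K : set G) : set (set G) :=
  [set d : set G | [/\ finite_set d, d !=set0 &
     forall g1 g2, d g1 -> d g2 -> r g1 = r g2 /\ K (mul (inv g1) g2)]].

(* Main.v *)
From HB Require Import structures.
Require Import Defs.
From mathcomp Require Import all_boot all_order all_algebra.
From mathcomp Require Import all_classical all_reals all_analysis.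
Set Implicit Arguments. Unset Strict Implicit. Unset Printing Implicit Defensive.
Local Open Scope classical_set_scope.

Lemma closed_eqf (T Y : topologicalType) (f g : T -> Y) :
  hausdorff_space Y -> continuous f -> continuous g -> closed [set t | f t = g t].
Proof.
move=> hY cf cg t clt; apply: hY => A B nA nB.
have : nbhs t (f @^-1` A `&` g @^-1` B) by apply: filterI; [exact: cf|exact: cg].
move=> /clt [t' [/= e [At' Bt']]]; exists (f t'); split => //; by rewrite e.
Qed.

Lemma within_comp (T U V : topologicalType) (A : set T) (B : set U)
  (f : T -> U) (g : U -> V) : continuous f -> (forall x, A x -> B (f x)) ->
  {within B, continuous g} -> {within A, continuous (g \o f)}.
Proof.
move=> cf AB /subspace_continuousP cg; apply/subspace_continuousP => x Ax.
have hg := cg _ (AB _ Ax).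
apply: cvg_trans hg; move=> W /= hW.
have := cf x _ hW; rewrite /= nbhs_filterE => h.
rewrite nbhs_simpl /=. move: h; rewrite nbhs_simpl /= /within; apply: filterS => y /= h Ay.
exact: h (AB _ Ay).
Qed.

Lemma within_pair (T U V : topologicalType) (A : set T) (f : T -> U) (g : T -> V) :
  {within A, continuous f} -> {within A, continuous g} ->
  {within A, continuous (fun x => (f x, g x))}.
Proof.
move=> /subspace_continuousP cf /subspace_continuousP cg.
apply/subspace_continuousP => x Ax; exact: cvg_pair (cf _ Ax) (cg _ Ax).
Qed.


Lemma cont_fst (T U : topologicalType) : continuous (@fst T U).
Proof. by move=> [a b]; apply: cvg_fst. Qed.
Lemma cont_snd (T U : topologicalType) : continuous (@snd T U).
Proof. by move=> [a b]; apply: cvg_snd. Qed.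
Lemma cont_pair (T U V : topologicalType) (f : T -> U) (g : T -> V) :
  continuous f -> continuous g -> continuous (fun x => (f x, g x)).
Proof. by move=> cf cg x; apply: cvg_pair; [exact: cf | exact: cg]. Qed.
Lemma cont_comp (T U V : topologicalType) (f : T -> U) (g : U -> V) :
  continuous f -> continuous g -> continuous (g \o f).
Proof. by move=> cf cg x; apply: continuous_comp; [exact: cf | exact: cg]. Qed.


Section PT.
Variables (T : topologicalType) (x0 : T).
Definition ptT : Type := T.
HB.instance Definition _ := Topological.on ptT.
HB.instance Definition _ := isPointed.Build ptT x0.
Lemma compact_ptT (A : set T) : compact A -> cover_compact (A : set ptT).
Proof. move=> cA. rewrite -compact_cover. exact: cA. Qed.
End PT.

Lemma card_le_I (T : Type) (A : set T) n (f : T -> nat) :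
  (forall x, A x -> (f x < n)%N) -> {in A &, injective f} -> (A #<= `I_n)%card.
Proof. by move=> h hi; apply/pcard_leP/injfunPex; exists f => // x /h. Qed.

Lemma finite_ordT n : finite_set [set: 'I_n].
Proof.
apply/finite_set_leP; exists n; apply: (@card_le_I _ _ _ (fun i : 'I_n => val i)).
  by move=> x _; exact: ltn_ord.
by move=> x y _ _; apply: val_inj.
Qed.

Section Groupoid.
Variables (G X : topologicalType) (r s : G -> X) (u : X -> G)
    (inv : G -> G) (mul : G -> G -> G).
Hypothesis EG : etale_groupoid r s u inv mul.

Lemma rU x : r (u x) = x. Proof. by case: EG => -[h _ _ _ _] _; case: (h x). Qed.
Lemma sU x : s (u x) = x. Proof. by case: EG => -[h _ _ _ _] _; case: (h x). Qed.
Lemma rM g h : s g = r h -> r (mul g h) = r g.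
Proof. by case: EG => -[_ hh _ _ _] _ /hh []. Qed.
Lemma sM g h : s g = r h -> s (mul g h) = s h.
Proof. by case: EG => -[_ hh _ _ _] _ /hh []. Qed.
Lemma mulA g h k : s g = r h -> s h = r k -> mul (mul g h) k = mul g (mul h k).
Proof. by case: EG => -[_ _ hh _ _] _; apply: hh. Qed.
Lemma mul1l g : mul (u (r g)) g = g. Proof. by case: EG => -[_ _ _ hh _] _; case: (hh g). Qed.
Lemma mul1r g : mul g (u (s g)) = g. Proof. by case: EG => -[_ _ _ hh _] _; case: (hh g). Qed.
Lemma rV g : r (inv g) = s g. Proof. by case: EG => -[_ _ _ _ hh] _; case: (hh g). Qed.
Lemma sV g : s (inv g) = r g. Proof. by case: EG => -[_ _ _ _ hh] _; case: (hh g). Qed.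
Lemma mulV g : mul g (inv g) = u (r g). Proof. by case: EG => -[_ _ _ _ hh] _; case: (hh g). Qed.
Lemma Vmul g : mul (inv g) g = u (s g). Proof. by case: EG => -[_ _ _ _ hh] _; case: (hh g). Qed.

Lemma inv_uniq x y : s x = r y -> mul x y = u (s y) -> x = inv y.
Proof.
move=> sxy e.
have -> : x = mul x (mul y (inv y)) by rewrite mulV -sxy mul1r.
rewrite -mulA ?rV // e -(rV y) mul1l //.
Qed.

Lemma invK g : inv (inv g) = g.
Proof. by symmetry; apply: inv_uniq; rewrite ?rV // mulV sV. Qed.

Lemma mulKV g a : r g = r a -> mul g (mul (inv g) a) = a.
Proof. by move=> e; rewrite -mulA ?rV ?sV // mulV e mul1l. Qed.

Lemma mulVK g a : s g = r a -> mul (inv g) (mul g a) = a.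
Proof. by move=> e; rewrite -mulA ?rV ?sV // Vmul e mul1l. Qed.

Lemma invM g h : s g = r h -> inv (mul g h) = mul (inv h) (inv g).
Proof.
move=> sgh; symmetry; apply: inv_uniq.
  by rewrite sM ?rV ?sV ?rM.
by rewrite mulA ?sV ?rV ?rM // mulVK // Vmul sM.
Qed.


Lemma hausG : hausdorff_space G. Proof. by case: EG => _ [[]]. Qed.
Lemma hausX : hausdorff_space X. Proof. by case: EG => _ [_ []]. Qed.
Lemma cr : continuous r. Proof. by case: EG => _ [_ _ []]. Qed.
Lemma cs : continuous s. Proof. by case: EG => _ [_ _ []]. Qed.
Lemma cu : continuous u. Proof. by case: EG => _ [_ _ []]. Qed.
Lemma cinv : continuous inv. Proof. by case: EG => _ [_ _ []]. Qed.
Lemma cmul : {within [set p : G * G | s p.1 = r p.2], continuous (fun p => mul p.1 p.2)}.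
Proof. by case: EG => _ []. Qed.
Lemma lhr : local_homeo r. Proof. by case: EG => _ []. Qed.

Lemma part1 K : G_simplicial_complex r s u mul r mul (Delta_K r inv mul K).
Proof.
split.
- split.
  + by case: EG => _ [].
  + exact: lhr.
  + exact: cmul.
  + by move=> g y e; rewrite rM.
  + split; [exact: mul1l | by move=> *; rewrite mulA].
- by move=> d [].
- move=> d [_ [g0 dg0] h]; exists (r g0) => g dg; exact: (h g g0 dg dg0).1.
- move=> d d' [fd _ h] sub ne; split => //; first exact: sub_finite_set fd.
  by move=> g1 g2 /sub d1 /sub d2; apply: h.
- move=> g d [fd [g0 dg0] h] sub; split; first exact: finite_image.
    by exists (mul g g0), g0.
  move=> _ _ [a da <-] [b db <-].
  have sa : s g = r a by rewrite (sub a da).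
  have sb : s g = r b by rewrite (sub b db).
  rewrite !rM //; split => //.
  rewrite invM // mulA ?sV ?rV ?rM // mulVK //; exact: (h a b da db).2.
Qed.

Lemma part_Gcompact K : compact K -> G_compact s r mul (Delta_K r inv mul K).
Proof.
move=> cK; exists (K `&` [set c | c = u (r c)]).
  apply: compact_closedI => //; apply: closed_eqf.
  - exact: hausG.
  - by move=> x; apply: cvg_id.
  - exact: (cont_comp cr cu).
apply/seteqP; split => y /=.
  move=> [_ _ h]; have := (h y y erefl erefl).2; rewrite Vmul => Ky.
  exists y, (u (s y)); split; last by rewrite mul1r.
  - by split => //; rewrite rU.
  - by rewrite rU.
move=> [g [c [[Kc ec] sgc ->]]]; split; first exact: finite_set1.
  by exists (mul g c).
move=> g1 g2 -> ->; split => //; rewrite Vmul sM //.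
have -> : s c = r c by rewrite ec sU rU.
by rewrite -ec.
Qed.

Lemma part_proper : proper_action s r mul.
Proof.
move=> C cC.
pose C' := C `&` [set q : G * G | s q.1 = s q.2].
pose phi := fun q : G * G => (mul q.1 (inv q.2), q.2).
have -> : [set p : G * G | s p.1 = r p.2 /\ C (mul p.1 p.2, p.2)] = phi @` C'.
  apply/seteqP; split => [[p1 p2] /= [e Cp]|].
    exists (mul p1 p2, p2); first by split => //=; rewrite sM.
    by rewrite /phi /= mulA ?rV ?sM // mulV -e mul1r.
  move=> _ [[q1 q2] [Cq /= e] <-] /=; split; first by rewrite sM ?rV ?sV.
  by rewrite mulA ?rV ?sV // Vmul -e mul1r.
apply: continuous_compact; last first.
  apply: compact_closedI => //; apply: closed_eqf.
  - exact: hausX.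
  - exact: (cont_comp (@cont_fst _ _) cs).
  - exact: (cont_comp (@cont_snd _ _) cs).
apply: within_pair; last exact/continuous_subspaceT/cont_snd.
have := @within_comp _ _ _ C' [set p : G * G | s p.1 = r p.2]
  (fun q : G * G => (q.1, inv q.2)) (fun p => mul p.1 p.2).
apply.
- apply: cont_pair; [exact: cont_fst | exact: (cont_comp (@cont_snd _ _) cinv)].
- by move=> [q1 q2] [_ /= e]; rewrite rV.
- exact: cmul.
Qed.

Lemma part_H1 K : compact K -> H1 (Delta_K r inv mul K).
Proof.
move=> cK K' cK'.
pose T := ((((K' `*` K) `&` [set p : G * G | s p.1 = r p.2])
   `&` ((fun p : G * G => inv p.2) @^-1` K))
   `&` ((fun p : G * G => u (s p.2)) @^-1` K))
   `&` ((fun p : G * G => u (s p.1)) @^-1` K).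
have clK : closed K by apply: compact_closed => //; exact: hausG.
have cT : compact T.
  apply: compact_closedI; last first.
    apply: preimage_closed => // x _.
    exact: (cont_comp (cont_comp (@cont_fst _ _) cs) cu).
  apply: compact_closedI; last first.
    apply: preimage_closed => // x _.
    exact: (cont_comp (cont_comp (@cont_snd _ _) cs) cu).
  apply: compact_closedI; last first.
    apply: preimage_closed => // x _.
    exact: (cont_comp (@cont_snd _ _) cinv).
  apply: compact_closedI; first exact: compact_setX.
  apply: closed_eqf; first exact: hausX.
  - exact: (cont_comp (@cont_fst _ _) cs).
  - exact: (cont_comp (@cont_snd _ _) cr).
have -> : [set y | exists2 y', K' y' & Delta_K r inv mul K [set y; y']] =
    (fun p => mul p.1 p.2) @` T.
  apply/seteqP; split => [y [y' K'y' [_ _ h]]|].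
    have [ry Kyy'] := h y y' (or_introl erefl) (or_intror erefl).
    have [_ Ky'y] := h y' y (or_intror erefl) (or_introl erefl).
    have [_ Kyy] := h y y (or_introl erefl) (or_introl erefl).
    have [_ Ky'y'] := h y' y' (or_intror erefl) (or_intror erefl).
    exists (y', mul (inv y') y); last by rewrite /= mulKV.
    have e : s (inv y') = r y by rewrite sV.
    split; [split; [split; [split|]|]|] => /=.
    - by [].
    - by rewrite rM ?rV ?sV.
    - by rewrite invM // invK.
    - by rewrite sM // -Vmul.
    - by rewrite -Vmul.
  move=> _ [[p1 p2] [[[[[K'p1 Kp2] /= e] Kip2] Kup2] Kup1] <-] /=.
  exists p1 => //; split; first exact: finite_set2.
    by exists (mul p1 p2); left.
  move=> g1 g2 [->|->] [->|->]; rewrite ?rM //; split => //.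
  - by rewrite Vmul sM.
  - rewrite invM // mulA ?sV ?rV ?rM // Vmul e -(sV p2) mul1r //.
  - by rewrite mulVK.
  - by rewrite Vmul.
apply: continuous_compact => //.
apply: continuous_subspaceW cmul.
by move=> p [[[[]]]].
Qed.

Lemma part_H2 K : compact K -> H2 (Delta_K r inv mul K).
Proof.
move=> cK k L le net lim [[l0 _] refl trans dir] conv hD.
have clK : closed K by apply: compact_closed => //; exact: hausG.
pose F := filter_from [set: L] (fun l1 => [set l | le l1 l]).
have FF : ProperFilter F.
  apply: filter_from_proper; last by move=> i _; exists i; exact: refl.
  apply: filter_from_filter; first by exists l0.
  move=> i j _ _; have [c [ic jc]] := dir i j; exists c => // l /= lc.
  by split; apply: trans lc.
have convF : forall i, net i @ F --> lim i.
  move=> i U nU; have [l1 h] := conv i U nU; exists l1 => // l; exact: h.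
have hh : forall i j l, r (net i l) = r (net j l) /\ K (mul (inv (net i l)) (net j l)).
  move=> i j l; have [_ _ h] := hD l; apply: h; [by exists i | by exists j].
split.
- exact: finite_image (finite_ordT _).
- by exists (lim ord0), ord0.
move=> _ _ [i _ <-] [j _ <-].
have rij : r (lim i) = r (lim j).
  apply: (@cvg_unique _ hausX ((r \o net i) @ F) _).
    exact: continuous_cvg _ (@cr (lim i)) (convF i).
  have -> : r \o net i = r \o net j by apply: funext => l; exact: (hh i j l).1.
  exact: continuous_cvg _ (@cr (lim j)) (convF j).
split => //.
pose A := [set p : G * G | s p.1 = r p.2].
pose P := fun l => (inv (net i l), net j l).
have Ap0 : A (inv (lim i), lim j) by rewrite /A /= sV.
have hm := (subspace_continuousP A (fun p => mul p.1 p.2)).1 cmul _ Ap0.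
have hP : P @ F --> within A (nbhs (inv (lim i), lim j)).
  move=> W /=; rewrite /within nbhs_simpl => hW.
  have hP0 : P @ F --> (inv (lim i), lim j).
    apply: cvg_pair => //; exact: continuous_cvg _ (@cinv (lim i)) (convF i).
  have := hP0 _ hW; rewrite nbhs_simpl /fmap /=; apply: filterS => l /= h; apply: h.
  by rewrite /A /P /= sV (hh i j l).1.
apply: (@closed_cvg _ _ F FF (fun l => mul (P l).1 (P l).2) K clK).
  by apply: nearW => l; exact: (hh i j l).2.
exact: cvg_trans (cvg_app _ hP) hm.
Qed.

Lemma part_fd K : compact K -> finite_dimensional (Delta_K r inv mul K).
Proof.
move=> cK.
have [[g0 Kg0]|K0] := pselect (exists g, K g); last first.
  exists 0%N => d [_ [g dg] h]; exfalso; apply: K0; exists (mul (inv g) g).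
  exact: (h g g dg dg).2.
have [V hV] : exists V : G -> set G, forall t,
    [/\ open (V t), V t t & {in V t &, injective r}].
  have [V hV] := choice lhr.2; exists V => t; have [? ? ? _] := hV t; by split.
have oV : forall i, open (V i) by move=> i; case: (hV i).
have VV : forall i, V i i by move=> i; case: (hV i).
have iV : forall i, {in V i &, injective r} by move=> i; case: (hV i).
have cc := compact_ptT g0 cK.
have [D' sD' cov] := cc G K V
  (fun i _ => oV i) (fun x Kx => ex_intro2 _ _ x Kx (VV x)).
pose sq := finmap.enum_fset D'.
exists (size sq) => d [fd [g1 dg1] h].
pose f := fun g2 => find (fun k => `[< V k (mul (inv g1) g2) >]) sq.
have hasf : forall g2, d g2 -> has (fun k => `[< V k (mul (inv g1) g2) >]) sq.
  move=> g2 dg2; have [kk Dk Vk] := cov _ (h g1 g2 dg1 dg2).2.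
  by apply/hasP; exists kk => //; apply/asboolP.
apply: (@card_le_I _ _ _ f).
  by move=> g2 dg2; rewrite /f -has_find; apply: hasf.
move=> a b /set_mem da /set_mem db fab.
have [ra _] := h g1 a dg1 da.
have [rb _] := h g1 b dg1 db.
have Va := nth_find g0 (hasf a da).
have Vb := nth_find g0 (hasf b db).
rewrite -/(f a) fab -/(f b) in Va.
move/asboolP: Va => Va; move/asboolP: Vb => Vb.
have := iV (nth g0 sq (f b)) _ _ (mem_set Va) (mem_set Vb).
rewrite !rM ?sV // => /(_ erefl) e.
by rewrite -(mulKV ra) e mulKV.
Qed.
End Groupoid.

Unset Implicit Arguments.

Theorem proposition3p26 (G X : topologicalType) (r s : G -> X) (u : X -> G)
    (inv : G -> G) (mul : G -> G -> G) (K : set G) :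
  etale_groupoid r s u inv mul -> compact K ->
  [/\ G_simplicial_complex r s u mul r mul (Delta_K r inv mul K)
        /\ finite_dimensional (Delta_K r inv mul K),
      H1 (Delta_K r inv mul K) /\ H2 (Delta_K r inv mul K) &
      proper_action s r mul /\ G_compact s r mul (Delta_K r inv mul K)].
Proof.
move=> EG cK.
exact (And3 (conj (part1 EG K) (part_fd EG cK)) (conj (part_H1 EG cK) (part_H2 EG cK))
  (conj (part_proper EG) (part_Gcompact EG cK))).
Qed.
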